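(* Let $H[A,B]$ be a cubic brace distinct from $\mathbb{C}_4$. Then every pair $(a,b)$ with $a\in A$ and $b\in B$ is $\lambda$-matchable. Consequently, if $H\neq\Theta$ then $\rho(H)=\beta'(H)$.
   Context: Graphs are loopless but may have parallel edges. $\Theta$ has two vertices and three parallel edges; $\mathbb{C}_4$ is the $4$-cycle with every other edge doubled. A brace is a bipartite matching covered graph with no nontrivial tight cut (a cut $C$ is tight if $|C\cap M|=1$ for every perfect matching $M$, trivial if a shore has at most one vertex). For a connected bipartite cubic graph $H[A,B]$, $a\in A$, $b\in B$, an $(a,b)$-matching is a spanning subgraph in which $a,b$ have degree $3$ and all other vertices degree $1$; $(a,b)$ is $\lambda$-matchable if one exists; $\rho(H)$ is the number of $\lambda$-matchable pairs. For a matching covered graph, $\beta'$ is $\sum (n(J)/2)^2$ over all braces $J$ of order at least $6$ in its tight cut decomposition; for a brace $H$ of order at least $6$ this is $(n(H)/2)^2$, and $\beta'(\Theta)=0$. *)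

(* Defs.v *)
From mathcomp Require Import all_boot.
Set Implicit Arguments. Unset Strict Implicit. Unset Printing Implicit Defensive.

Section MG.
Variables (V E : finType) (eu ev : E -> V).

Definition loopless := forall e, eu e != ev e.

Definition inc (e : E) (x : V) : bool := (eu e == x) || (ev e == x).

(* degree of x in the spanning subgraph with edge set F (graph loopless) *)
Definition degF (F : {set E}) (x : V) : nat := #|[set e in F | inc e x]|.

Definition cubic := forall x, degF setT x = 3.

(* H[A,B] with B = ~: A: every edge has exactly one end in A *)
Definition bipartite_with (A : {set V}) :=
  forall e, (eu e \in A) != (ev e \in A).

Definition adj (x y : V) : bool :=
  [exists e, ((eu e == x) && (ev e == y)) || ((ev e == x) && (eu e == y))].

Definition connected := forall x y, connect adj x y.

Definition perfect_matching (M : {set E}) := forall x, degF M x = 1.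

Definition matching_covered :=
  [/\ connected, 1 < #|V|, exists M, perfect_matching M &
      forall e, exists M, perfect_matching M /\ e \in M].

Definition cut (X : {set V}) : {set E} :=
  [set e | (eu e \in X) != (ev e \in X)].

Definition tight (C : {set E}) :=
  forall M, perfect_matching M -> #|C :&: M| = 1.

Definition brace (A : {set V}) :=
  [/\ bipartite_with A, matching_covered &
      forall X : {set V}, tight (cut X) -> 2 <= #|X| -> 2 <= #|~: X| -> False].

Definition ab_matching (a b : V) (F : {set E}) : bool :=
  [&& degF F a == 3, degF F b == 3 &
      [forall x, (x != a) && (x != b) ==> (degF F x == 1)]].

Definition lambda_matchable (a b : V) : bool := [exists F, ab_matching a b F].

Definition rho (A : {set V}) : nat :=
  #|[set p : V * V | [&& p.1 \in A, p.2 \notin A & lambda_matchable p.1 p.2]]|.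

(* beta'(H) for a brace H: its tight cut decomposition is H itself, so
   beta'(H) = (n(H)/2)^2 if n(H) >= 6, and 0 otherwise. *)
Definition beta_prime_brace : nat :=
  if 6 <= #|V| then (#|V| %/ 2) ^ 2 else 0.
End MG.

Definition mg_iso (V E : finType) (eu ev : E -> V)
  (V' E' : finType) (eu' ev' : E' -> V') :=
  exists (fV : V -> V') (fE : E -> E'), [/\ bijective fV, bijective fE &
    forall e, ((eu' (fE e) == fV (eu e)) && (ev' (fE e) == fV (ev e))) ||
              ((eu' (fE e) == fV (ev e)) && (ev' (fE e) == fV (eu e)))].

Definition Theta_u (e : 'I_3) : 'I_2 := inord 0.
Definition Theta_v (e : 'I_3) : 'I_2 := inord 1.

(* C4: 4-cycle 0-1-2-3-0 with edges 01 and 23 doubled (every other edge) *)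
Definition C4_u (e : 'I_6) : 'I_4 := inord (nth 0 [:: 0; 0; 1; 2; 2; 3] e).
Definition C4_v (e : 'I_6) : 'I_4 := inord (nth 0 [:: 1; 1; 2; 3; 3; 0] e).

Definition is_Theta (V E : finType) (eu ev : E -> V) := mg_iso eu ev Theta_u Theta_v.
Definition is_C4 (V E : finType) (eu ev : E -> V) := mg_iso eu ev C4_u C4_v.

(* Main.v *)
Require Import Defs.
From mathcomp Require Import all_boot zify.
Set Implicit Arguments. Unset Strict Implicit. Unset Printing Implicit Defensive.
Set Warnings "-notation-overridden".
Section HallS.
Variables (T : finType) (r : rel T).
Definition NY (S Y : {set T}) := [set y in Y | [exists x in S, r x y]].

Lemma NY_sub S Y : NY S Y \subset Y.
Proof. by apply/subsetP=> y; rewrite inE => /andP[]. Qed.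

Lemma hall_gen n (X Y : {set T}) : #|X| < n ->
  (forall S : {set T}, S \subset X -> #|S| <= #|NY S Y|) ->
  exists f : T -> T, {in X, forall x, f x \in Y /\ r x (f x)} /\ {in X &, injective f}.
Proof.
elim: n X Y => [//|n IH] X Y ltX hyp.
have [->|/set0Pn [x0 x0X]] := eqVneq X set0.
  by exists id; split=> x; rewrite inE.
case: (boolP [exists S : {set T}, [&& S \subset X, S != set0, S != X & #|NY S Y| <= #|S|]]).
- case/existsP=> S0 /and4P[S0X S0n0 S0nX leN0].
  have ltS0 : #|S0| < #|X| by apply: proper_card; rewrite properEneq S0nX.
  have [f1 [f1P f1I]] : exists f : T -> T, {in S0, forall x, f x \in Y /\ r x (f x)} /\ {in S0 &, injective f}.
    apply: (IH S0 Y); first by apply: leq_trans ltS0 _.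
    by move=> S SS0; apply: hyp; apply: subset_trans SS0 S0X.
  set N0 := NY S0 Y.
  have eqN0 : #|N0| = #|S0| by apply/eqP; rewrite eqn_leq leN0 hyp.
  have [f2 [f2P f2I]] : exists f : T -> T, {in X :\: S0, forall x, f x \in Y :\: N0 /\ r x (f x)} /\ {in X :\: S0 &, injective f}.
    apply: (IH _ (Y :\: N0)).
      rewrite cardsD (setIidPr S0X).
      have : 0 < #|S0| by rewrite card_gt0.
      move: ltX; lia.
    move=> S SX.
    have disj : [disjoint S & S0].
      rewrite -setI_eq0; apply/eqP/setP=> x; rewrite !inE.
      by apply/negP=> /andP[/(subsetP SX)]; rewrite inE => /andP[/negP].
    have h1 := hyp (S :|: S0).
    have h1' : #|S| + #|S0| <= #|NY (S :|: S0) Y|.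
      have e0 : S :&: S0 = set0 by apply/eqP; rewrite setI_eq0.
      rewrite -cardsUI e0 cards0 addn0; apply: h1.
      by rewrite subUset S0X andbT; apply: subset_trans SX (subsetDl _ _).
    have sub : NY (S :|: S0) Y \subset NY S (Y :\: N0) :|: N0.
      apply/subsetP=> y yN; rewrite in_setU; case: (boolP (y \in N0)) => yN0; first by rewrite orbT.
      rewrite orbF; move: yN; rewrite inE => /andP[yY /existsP[x /andP[]]].
      rewrite inE => /orP[xS rxy|xS0 rxy].
        by rewrite inE in_setD yN0 yY /=; apply/existsP; exists x; rewrite xS.
      by case/negP: yN0; rewrite inE yY; apply/existsP; exists x; rewrite xS0.
    have := leq_trans h1' (subset_leq_card sub).
    move=> h2; have := leq_trans h2 (leq_card_setU _ _).
    by rewrite eqN0 leq_add2r.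
  exists (fun x => if x \in S0 then f1 x else f2 x); split.
    move=> x xX; case: ifP => xS0; first exact: f1P.
    have xD : x \in X :\: S0 by rewrite inE xS0 xX.
    by have [] := f2P x xD; rewrite inE => /andP[_ ->].
  have inN0 x : x \in S0 -> f1 x \in N0.
    move=> xS0; have [fy rf] := f1P x xS0.
    by rewrite inE fy; apply/existsP; exists x; rewrite xS0.
  have notN0 x : x \in X -> x \notin S0 -> f2 x \notin N0.
    move=> xX xS0; have xD : x \in X :\: S0 by rewrite inE xS0 xX.
    by have [] := f2P x xD; rewrite inE => /andP[].
  move=> x x' xX x'X; case: ifP => xS0; case: ifP => x'S0.
  + exact: f1I.
  + by move=> e; move: (notN0 _ x'X (negbT x'S0)); rewrite -e inN0.
  + by move=> e; move: (notN0 _ xX (negbT xS0)); rewrite e inN0.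
  + by apply: f2I; rewrite inE ?xS0 ?x'S0 ?xX ?x'X.
- rewrite negb_exists => /forallP big.
  have gt (S : {set T}) : S \subset X -> S != set0 -> S != X -> #|S| < #|NY S Y|.
    move=> SX Sn0 SnX; move: (big S); rewrite SX Sn0 SnX /=.
    by rewrite ltnNge.
  have : 0 < #|NY [set x0] Y|.
    by apply: leq_trans (hyp _ _); rewrite ?cards1 // sub1set.
  rewrite card_gt0 => /set0Pn [y0]; rewrite inE => /andP[y0Y /existsP[x]].
  rewrite inE => /andP[/eqP exx rxy0]; subst x.
  have [f2 [f2P f2I]] : exists f : T -> T, {in X :\ x0, forall x, f x \in Y :\ y0 /\ r x (f x)} /\ {in X :\ x0 &, injective f}.
    apply: IH.
      by move: ltX; rewrite (cardsD1 x0 X) x0X add1n ltnS.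
    move=> S SX.
    have [->|Sn0] := eqVneq S set0; first by rewrite cards0.
    have SX' : S \subset X by apply: subset_trans SX (subsetDl _ _).
    have SnX : S != X.
      apply/eqP=> eSX; move: x0X; rewrite -eSX => /(subsetP SX).
      by rewrite !inE eqxx.
    have h := gt S SX' Sn0 SnX.
    have sub : NY S Y \subset y0 |: NY S (Y :\ y0).
      apply/subsetP=> y; rewrite !inE => /andP[yY ex].
      by case: eqP => //= _; rewrite yY.
    have := leq_trans h (subset_leq_card sub).
    by move/leq_trans=> /(_ _ (leq_card_setU _ _)); rewrite cards1 add1n ltnS.
  exists (fun x => if x == x0 then y0 else f2 x); split.
    move=> x xX; case: eqP => [->|/eqP xn]; first by split.
    have xD : x \in X :\ x0 by rewrite !inE xn xX.
    by have [] := f2P x xD; rewrite !inE => /andP[_ ->].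
  have ny x : x \in X -> x != x0 -> f2 x != y0.
    move=> xX xn; have xD : x \in X :\ x0 by rewrite !inE xn xX.
    by have [] := f2P x xD; rewrite !inE => /andP[].
  move=> x x' xX x'X; case: eqP => [->|/eqP xn]; case: eqP => [->|/eqP x'n] //.
  + by move=> e; move: (ny _ x'X x'n); rewrite -e eqxx.
  + by move=> e; move: (ny _ xX xn); rewrite e eqxx.
  + by apply: f2I; rewrite !inE ?xn ?x'n ?xX ?x'X.
Qed.
End HallS.

Section G.
Variables (V E : finType) (eu ev : E -> V) (A : {set V}).
Hypothesis bip : bipartite_with eu ev A.
Local Notation degF := (degF eu ev).
Local Notation inc := (inc eu ev).
Local Notation adj := (adj eu ev).

Definition aend e := if eu e \in A then eu e else ev e.
Definition bend e := if eu e \in A then ev e else eu e.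

Lemma aendA e : aend e \in A.
Proof. by rewrite /aend; case: ifP => // h; move: (bip e); rewrite h; case: (ev e \in A). Qed.
Lemma bendB e : bend e \notin A.
Proof. by rewrite /bend; case: ifP => // h; move: (bip e); rewrite h; case: (ev e \in A). Qed.

Lemma incE e x : inc e x = (aend e == x) || (bend e == x).
Proof. by rewrite /inc /aend /bend; case: ifP => _ //; rewrite orbC. Qed.

Lemma incA e x : x \in A -> inc e x = (aend e == x).
Proof.
move=> xA; rewrite incE; case: (eqVneq (bend e) x) => [ex|]; last by rewrite orbF.
by move: (bendB e); rewrite ex xA.
Qed.
Lemma incB e x : x \notin A -> inc e x = (bend e == x).
Proof.
move=> xA; rewrite incE; case: (eqVneq (aend e) x) => [ex|] //=.
by move: (aendA e); rewrite ex (negbTE xA).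
Qed.

Lemma endsP e x y : aend e = x -> bend e = y ->
  ((x == eu e) && (y == ev e)) || ((x == ev e) && (y == eu e)).
Proof. by move=> <- <-; rewrite /aend /bend; case: ifP; rewrite !eqxx ?orbT. Qed.

Lemma adjAB x y : x \in A -> y \notin A ->
  adj x y = [exists e, (aend e == x) && (bend e == y)].
Proof.
move=> xA yB; rewrite /Defs.adj; apply/existsP/existsP => [][e he]; exists e.
  rewrite /aend /bend; case/orP: he => /andP[/eqP ex /eqP ey]; subst.
    by rewrite xA !eqxx.
  by rewrite (negbTE yB) !eqxx.
move: he; rewrite /aend /bend; case: ifP => h /andP[/eqP ex /eqP ey]; subst; by rewrite !eqxx ?orbT.
Qed.

Lemma adj_sym x y : adj x y = adj y x.
Proof.
by rewrite /Defs.adj; apply/existsP/existsP=> [][e he]; exists e; case/orP: he => /andP[-> ->]; rewrite ?orbT.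
Qed.

Lemma count_A (F : {set E}) (T : {set V}) : T \subset A ->
  #|[set e in F | aend e \in T]| = \sum_(x in T) degF F x.
Proof.
move=> TA; rewrite -sum1dep_card (partition_big aend (mem T)) //=; last by move=> e /andP[].
apply: eq_bigr => x xT; rewrite /Defs.degF -sum1dep_card; apply: eq_bigl => e.
rewrite incA ?(subsetP TA) //; case: eqP => [->|]; by rewrite ?xT ?andbT ?andbF.
Qed.

Lemma count_B (F : {set E}) (T : {set V}) : T \subset ~: A ->
  #|[set e in F | bend e \in T]| = \sum_(x in T) degF F x.
Proof.
move=> TA; rewrite -sum1dep_card (partition_big bend (mem T)) //=; last by move=> e /andP[].
apply: eq_bigr => x xT; rewrite /Defs.degF -sum1dep_card; apply: eq_bigl => e.
have := subsetP TA x xT; rewrite inE => xB.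
rewrite incB //; case: eqP => [->|]; by rewrite ?xT ?andbT ?andbF.
Qed.

Lemma pm_card M : perfect_matching eu ev M -> #|A| = #|M| /\ #|~: A| = #|M|.
Proof.
move=> pm; split.
  have := count_A M (subxx A); rewrite (eq_bigr (fun _ => 1)) ?sum1_card // => <-.
  by apply: eq_card => e; rewrite !inE aendA andbT.
have := count_B M (subxx (~: A)); rewrite (eq_bigr (fun _ => 1)) ?sum1_card // => <-.
by apply: eq_card => e; rewrite !inE bendB andbT.
Qed.

Definition NS (S : {set V}) := [set y | [exists x in S, adj x y]].

Lemma NS_B (S : {set V}) : S \subset A -> NS S \subset ~: A.
Proof.
move=> SA; apply/subsetP => y; rewrite !inE => /existsP[x /andP[xS /existsP[e he]]].
have xA := subsetP SA x xS.
apply/negP=> yA; case/orP: he => /andP[/eqP ex /eqP ey]; subst; move: (bip e); by rewrite xA yA.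
Qed.

Lemma extend_set (N B : {set V}) m : N \subset B -> #|N| <= m -> m <= #|B| ->
  exists T : {set V}, [/\ N \subset T, T \subset B & #|T| = m].
Proof.
move=> NB; move: m; suff: forall d, #|N| + d <= #|B| -> exists T : {set V}, [/\ N \subset T, T \subset B & #|T| = #|N| + d].
  by move=> h m le1 le2; have := h (m - #|N|); rewrite subnKC //; apply.
elim=> [|d IH] le; first by exists N; rewrite addn0.
have [T [NT TB cT]] : exists T : {set V}, [/\ N \subset T, T \subset B & #|T| = #|N| + d] by apply: IH; move: le; lia.
have : T \proper B by rewrite properEcard TB cT /=; move: le; lia.
case/properP=> _ [y yB yT]; exists (y |: T); split.
- by apply: subset_trans NT (subsetUr _ _).
- by rewrite subUset sub1set yB.
- by rewrite cardsU1 yT cT addnS.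
Qed.

Lemma cut_ab (X : {set V}) e : ((eu e \in X) != (ev e \in X)) = ((aend e \in X) != (bend e \in X)).
Proof. by rewrite /aend /bend; case: ifP => _ //; rewrite eq_sym. Qed.

Hypothesis tightfree : forall X : {set V}, tight eu ev (cut eu ev X) -> 2 <= #|X| -> 2 <= #|~: X| -> False.
Variable M0 : {set E}.
Hypothesis pm0 : perfect_matching eu ev M0.

Lemma brace_P (S : {set V}) : S \subset A -> 0 < #|S| -> #|S| + 2 <= #|A| -> #|S| + 2 <= #|NS S|.
Proof.
move=> SA S0 Sk; rewrite leqNgt; apply/negP => lt.
have [cA cB] := pm_card pm0.
have [T [NT TB cT]] := @extend_set _ _ (#|S|+1) (NS_B SA) (ltac:(lia)) (ltac:(lia)).
have dST : S :&: T = set0.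
  apply/setP=> x; rewrite !inE; case xS: (x \in S) => //=.
  by apply/negP=> /(subsetP TB); rewrite inE (subsetP SA).
apply: (@tightfree (S :|: T)).
- move=> M pm.
  set ME := [set e in M | bend e \in T]; set MS := [set e in M | aend e \in S].
  have cME : #|ME| = #|T| by rewrite count_B // (eq_bigr (fun _ => 1)) ?sum1_card // => x _; apply: pm.
  have cMS : #|MS| = #|S| by rewrite count_A // (eq_bigr (fun _ => 1)) ?sum1_card // => x _; apply: pm.
  have sub : MS \subset ME.
    apply/subsetP=> e; rewrite !inE => /andP[eM aS]; rewrite eM /=.
    apply: (subsetP NT); rewrite inE; apply/existsP; exists (aend e); rewrite aS /=.
    by rewrite adjAB ?aendA ?bendB //; apply/existsP; exists e; rewrite !eqxx.
  have -> : cut eu ev (S :|: T) :&: M = ME :\: MS.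
    apply/setP=> e; rewrite /cut in_setI in_set cut_ab !inE.
    have -> : aend e \in T = false by apply/negP=> /(subsetP TB); rewrite inE aendA.
    have -> : bend e \in S = false by apply/negP=> /(subsetP SA); rewrite (negbTE (bendB e)).
    have := subsetP sub e; rewrite !inE orbF.
    by case: (e \in M); case: (aend e \in S); case: (bend e \in T) => //= ->.
  rewrite cardsD (setIidPr sub) cME cMS cT; lia.
- by rewrite cardsU dST cards0 cT; lia.
- have := cardsC (S :|: T); have := cardsC A.
  by rewrite cardsU dST cards0 cT; lia.
Qed.

Hypothesis cub : cubic eu ev.
Hypothesis k3 : 3 <= #|A|.

Definition Ex x := [set e | inc e x].
Lemma cardEx x : #|Ex x| = 3.
Proof. by rewrite -(cub x); apply: eq_card => e; rewrite !inE. Qed.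

Lemma adjA_B x y : x \in A -> adj x y -> y \notin A.
Proof.
move=> xA h; have : y \in NS [set x] by rewrite inE; apply/existsP; exists x; rewrite inE eqxx.
have sA : [set x] \subset A by rewrite sub1set.
by move/(subsetP (NS_B sA)); rewrite inE.
Qed.

Lemma adjB_A y x : y \notin A -> adj y x -> x \in A.
Proof.
move=> yB /existsP[e]; case/orP=> /andP[/eqP ex /eqP ey]; subst; move: (bip e) yB;
  by case: (eu e \in A); case: (ev e \in A).
Qed.

Lemma NA x : x \in A -> NS [set x] = bend @: Ex x.
Proof.
move=> xA; apply/setP=> y; rewrite inE; apply/existsP/imsetP.
  case=> x' /andP[]; rewrite inE => /eqP -> h.
  have yB := adjA_B xA h.
  move: h; rewrite adjAB // => /existsP[e /andP[/eqP ae /eqP be]].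
  by exists e; rewrite // inE incA // ae.
case=> e; rewrite inE incA // => /eqP ae ->; exists x; rewrite inE eqxx /=.
by rewrite adjAB ?bendB //; apply/existsP; exists e; rewrite ae !eqxx.
Qed.

Lemma simple e1 e2 : aend e1 = aend e2 -> bend e1 = bend e2 -> e1 = e2.
Proof.
move=> ea eb; set x := aend e1.
have xA : x \in A by apply: aendA.
have h := brace_P (S := [set x]); rewrite cards1 sub1set xA /= in h.
have h3 := h isT (ltac:(lia)); rewrite NA // in h3.
have : #|bend @: Ex x| == #|Ex x|.
  by rewrite eqn_leq leq_imset_card cardEx /=; move: h3; lia.
move/imset_injP => inj; apply: inj => //; by rewrite inE incA // /x ?ea eqxx.
Qed.

Lemma cardNA x : x \in A -> #|NS [set x]| = 3.
Proof.
move=> xA; rewrite NA // card_in_imset ?cardEx // => e1 e2.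
by rewrite !inE !incA // => /eqP a1 /eqP a2; apply: simple; rewrite a1 a2.
Qed.

Lemma cardNB y : y \notin A -> #|[set x | adj y x]| = 3.
Proof.
move=> yB; have -> : [set x | adj y x] = aend @: Ex y.
  apply/setP=> x; rewrite inE; apply/idP/imsetP.
    move=> h; have xA : x \in A.
      exact: adjB_A yB h.
    move: h; rewrite adj_sym adjAB // => /existsP[e /andP[/eqP ae /eqP be]].
    by exists e; rewrite // inE incB // be.
  case=> e; rewrite inE incB // => /eqP be ->.
  by rewrite adj_sym adjAB ?aendA //; apply/existsP; exists e; rewrite be !eqxx.
rewrite card_in_imset ?cardEx // => e1 e2.
by rewrite !inE !incB // => /eqP a1 /eqP a2 h; apply: simple; rewrite // a1 a2.
Qed.

Lemma card_edge x y : x \in A -> y \notin A -> adj x y ->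
  #|[set e | (aend e == x) && (bend e == y)]| = 1.
Proof.
move=> xA yB; rewrite adjAB // => /existsP[e0 h0]; apply/eqP/cards1P; exists e0.
apply/setP=> e; rewrite !inE; apply/idP/eqP => [h|->//].
by case/andP: h0 => /eqP a0 /eqP b0; case/andP: h => /eqP a /eqP b; apply: simple; rewrite ?a ?b.
Qed.

Lemma lm a b : a \in A -> b \notin A -> lambda_matchable eu ev a b.
Proof.
move=> aA bB.
set Na := NS [set a]; set Nb := [set x | adj b x].
have cNa : #|Na| = 3 by apply: cardNA.
have cNb : #|Nb| = 3 by apply: cardNB.
have NbA : Nb \subset A by apply/subsetP=> x; rewrite inE; apply: adjB_A.
have NaB : Na \subset ~: A by apply: NS_B; rewrite sub1set.
have inNa y : (y \in Na) = adj a y.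
  rewrite inE; apply/existsP/idP => [[x /andP[]]|h]; first by rewrite inE => /eqP ->.
  by exists a; rewrite inE eqxx.
set X' := A :\: (a |: Nb); set Y' := ~: A :\: (b |: Na).
have [cA cB] := pm_card pm0.
have cX : #|X'| = #|A| - #|a |: Nb|.
  by rewrite cardsD (setIidPr _) // subUset sub1set aA NbA.
have cY : #|Y'| = #|~: A| - #|b |: Na|.
  by rewrite cardsD (setIidPr _) // subUset sub1set inE bB NaB.
have abs : (a \in Nb) = (b \in Na) by rewrite inE inNa adj_sym.
have cXY : #|X'| = #|Y'| by rewrite cX cY !cardsU1 cNa cNb abs cA cB.
have cX3 : #|X'| + 3 <= #|A|.
  rewrite cX cardsU1 cNb; have : #|a |: Nb| <= #|A| by apply: subset_leq_card; rewrite subUset sub1set aA NbA.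
  by rewrite cardsU1 cNb; lia.
have [f [fP finj]] : exists f : V -> V, {in X', forall x, f x \in Y' /\ adj x (f x)} /\ {in X' &, injective f}.
  apply: (@hall_gen _ adj #|X'|.+1) => // S SX.
  have aS : a \notin S by apply/negP=> /(subsetP SX); rewrite !inE eqxx.
  have SA : a |: S \subset A.
    by rewrite subUset sub1set aA; apply: subset_trans SX (subsetDl _ _).
  have hP := brace_P SA; rewrite cardsU1 aS in hP.
  have := subset_leq_card SX; move=> cS.
  have hP' := hP (ltac:(lia)) (ltac:(lia)).
  have sub : NS (a |: S) \subset NY adj S Y' :|: Na.
    apply/subsetP=> y; rewrite inE => /existsP[x /andP[]]; rewrite in_setU1 => /orP[/eqP ->|xS] h.
      by rewrite in_setU inNa h orbT.
    case: (boolP (adj a y)) => hay; first by rewrite in_setU inNa hay orbT.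
    rewrite in_setU inNa (negbTE hay) orbF inE; apply/andP; split; last by apply/existsP; exists x; rewrite xS.
    have xX := subsetP SX x xS; move: xX; rewrite !inE => /andP[/norP[xa xNb] xA].
    have ne : [exists x0 in [set a], adj x0 y] = false by move: (inNa y); rewrite inE (negbTE hay).
    rewrite ne orbF (adjA_B xA h) andbT.
    by apply/eqP=> yb; move: xNb; rewrite -yb adj_sym h.
  have := leq_trans hP' (subset_leq_card sub).
  have le := (leq_card_setU (NY adj S Y') Na).1; rewrite cNa in le; rewrite /= in hP'; lia.
have imf : f @: X' = Y'.
  apply/eqP; rewrite eqEcard card_in_imset // cXY leqnn andbT.
  by apply/subsetP=> y /imsetP[x xX ->]; case: (fP x xX).
set Fm := [set e | (aend e \in X') && (bend e == f (aend e))].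
apply/existsP; exists (Ex a :|: Ex b :|: Fm).
have Fin e : (e \in Ex a :|: Ex b :|: Fm) = [|| aend e == a, bend e == b | (aend e \in X') && (bend e == f (aend e))].
  by rewrite !inE incA // incB // orbA.
have XA x : x \in X' -> [/\ x \in A, x != a & ~~ adj b x].
  by rewrite !inE => /andP[/norP[h1 h2] h3]; split.
have YB y : y \in Y' -> [/\ y \notin A, y != b & ~~ adj a y].
  rewrite in_setD in_setU1 inNa inE => /andP[/norP[h1 h2] h3]; by split.
apply/and3P; split.
- rewrite /Defs.degF -(cardEx a); apply/eqP/eq_card=> e; rewrite in_set Fin .
  rewrite [e \in Ex a]inE incA //; case: (eqVneq (aend e) a) => //= ea; rewrite andbF //.
- rewrite /Defs.degF -(cardEx b); apply/eqP/eq_card=> e; rewrite in_set Fin.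
  rewrite [e \in Ex b]inE incB //; case: (eqVneq (bend e) b) => eb; rewrite ?orbT ?andbF ?andbT //=.
apply/forallP=> x; apply/implyP=> /andP[xa xb].
case: (boolP (x \in A)) => xA.
  case: (boolP (adj b x)) => hbx.
    rewrite -(card_edge xA bB); last by rewrite adj_sym.
    apply/eqP/eq_card=> e; rewrite in_set Fin in_set incA //.
    have xXf : (x \in X') = false by rewrite !inE hbx orbT.
    case: (eqVneq (aend e) x) => [ex|ex]; last by rewrite !andbF.
    rewrite ?andbT ex.
    by rewrite (negbTE xa) xXf orbF.
  have xX : x \in X' by rewrite !inE xA negb_or xa hbx.
  have [_ hx] := fP x xX.
  rewrite -(card_edge xA (adjA_B xA hx) hx).
  apply/eqP/eq_card=> e; rewrite in_set Fin in_set incA //.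
  case: (eqVneq (aend e) x) => [ex|ex]; last by rewrite !andbF.
  rewrite ?andbT ex (negbTE xa) xX /=.
  case: (eqVneq (bend e) b) => //= eb.
  by case/negP: hbx; rewrite adj_sym adjAB //; apply/existsP; exists e; rewrite ex eb !eqxx.
case: (boolP (adj a x)) => hax.
  rewrite -(card_edge aA xA hax).
  apply/eqP/eq_card=> e; rewrite in_set Fin in_set incB //.
  case: (eqVneq (bend e) x) => [ex|ex]; last by rewrite !andbF.
  rewrite ?andbT ex (negbTE xb) /=.
  case: (aend e == a) => //=; apply/negbTE/negP=> /andP[aX /eqP xf].
  by case: (fP _ aX) => /YB [_ _ h] _; move: h; rewrite -xf hax.
have xY : x \in Y' by rewrite in_setD in_setU1 inNa negb_or xb hax inE xA.
move: (xY); rewrite -imf => /imsetP[x' x'X xf]; subst x.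
have [_ hx'] := fP x' x'X.
have [x'A _ _] := XA x' x'X.
rewrite -(card_edge x'A xA hx').
apply/eqP/eq_card=> e; rewrite in_set Fin in_set incB //.
case: (eqVneq (bend e) (f x')) => [ex|ex]; last by rewrite !andbF.
rewrite ?andbT ex (negbTE xb) /=.
case: (eqVneq (aend e) a) => [ea|ea] /=.
  by case/negP: hax; rewrite adjAB //; apply/existsP; exists e; rewrite ea ex !eqxx.
apply/idP/idP => [/andP[aX /eqP h]|/eqP ->]; last by rewrite x'X eqxx.
by apply/eqP; apply: finj.
Qed.
End G.

Section SG2.
Variables (V E : finType) (eu ev : E -> V) (A : {set V}).
Hypothesis bip : bipartite_with eu ev A.
Hypothesis cub : cubic eu ev.
Local Notation adj := (adj eu ev).
Local Notation aend := (aend eu ev A).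
Local Notation bend := (bend eu ev A).
Local Notation Ex := (Ex eu ev).

Lemma all_edges_A (a : V) : A = [set a] -> [set: E] = Ex a.
Proof.
move=> eA; apply/setP=> e; rewrite !inE (incA bip) ?eA ?inE //.
by have := aendA bip e; rewrite eA inE => ->.
Qed.

Lemma theta_iso : #|A| = 1 -> #|~: A| = 1 -> is_Theta eu ev.
Proof.
move=> /eqP/cards1P [a eA] /eqP/cards1P [b eB].
have cE : #|E| = 3 by rewrite -cardsT (all_edges_A eA) cardEx.
have cV : #|V| = 2 by rewrite -(cardsC A) eB eA !cards1.
pose fV := fun x => if x \in A then (inord 0 : 'I_2) else inord 1.
pose fE := fun e => cast_ord cE (enum_rank e).
exists fV, fE; split.
- apply: inj_card_bij; last by rewrite card_ord cV.
  move=> x y; rewrite /fV.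
  have hA z : z \in A -> z = a by rewrite eA inE => /eqP.
  have hB z : z \notin A -> z = b by rewrite -in_setC eB inE => /eqP.
  case: ifP => xA; case: ifP => yA; move/(congr1 (@nat_of_ord 2)); rewrite ?inordK //.
  + by rewrite (hA _ xA) (hA _ yA).
  + by rewrite (hB _ (negbT xA)) (hB _ (negbT yA)).
- apply: inj_card_bij; last by rewrite card_ord cE.
  by move=> e e' /cast_ord_inj /enum_rank_inj.
- move=> e; rewrite /Theta_u /Theta_v /fV; have := bip e.
  by case: (eu e \in A); case: (ev e \in A) => //= _; rewrite !eqxx ?orbT.
Qed.

Definition cl x y := [set e | (aend e == x) && (bend e == y)].

Lemma no_triple x y z : connected eu ev -> x \in A -> y \notin A -> z != x -> z != y ->
  #|cl x y| = 3 -> False.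
Proof.
move=> conn xA yB zx zy c3.
have s1 : cl x y = Ex x.
  apply/eqP; rewrite eqEcard cardEx // c3 leqnn andbT.
  by apply/subsetP=> e; rewrite !inE (incA bip) // => /andP[->].
have s2 : cl x y = Ex y.
  apply/eqP; rewrite eqEcard cardEx // c3 leqnn andbT.
  by apply/subsetP=> e; rewrite !inE (incB bip) // => /andP[_ ->].
have hx v : adj x v -> v = y.
  move=> h; have vB := adjA_B bip xA h.
  move: h; rewrite (adjAB eu ev xA vB) => /existsP[e /andP[/eqP ae /eqP be]].
  have : e \in cl x y by rewrite s1 inE (incA bip) // ae.
  by rewrite inE be => /andP[_ /eqP].
have hy v : adj y v -> v = x.
  move=> h; have vA := adjB_A bip yB h.
  move: h; rewrite adj_sym (adjAB eu ev vA yB) => /existsP[e /andP[/eqP ae /eqP be]].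
  have : e \in cl x y by rewrite s2 inE (incB bip) // be.
  by rewrite inE ae => /andP[/eqP].
have clo : closed adj [set x; y].
  move=> u v h; rewrite !inE.
  have [eux|ux] := eqVneq u x; first by subst u; rewrite (hx v h) eqxx orbT.
  have [euy|uy] := eqVneq u y; first by subst u; rewrite (hy v h) eqxx.
  have [ev'|vx] := eqVneq v x; first by move: h; rewrite ev' adj_sym => /hx /eqP; rewrite (negbTE uy).
  have [ev'|vy] := eqVneq v y => //.
  by move: h; rewrite ev' adj_sym => /hy /eqP; rewrite (negbTE ux).
have := closed_connect clo (conn x z); rewrite !inE eqxx /= (negbTE zx) (negbTE zy).
by [].
Qed.

Lemma clP e x y : e \in cl x y -> aend e = x /\ bend e = y.
Proof. by rewrite inE => /andP[/eqP -> /eqP ->]. Qed.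

Lemma endsP' e x y : aend e = x -> bend e = y ->
  ((y == eu e) && (x == ev e)) || ((y == ev e) && (x == eu e)).
Proof. move=> h1 h2; rewrite orbC !(andbC (y == _)). exact: (@endsP _ _ eu ev A _ _ _ h1 h2). Qed.

Lemma c4_from a1 a2 b b' : A = [set a1; a2] -> ~: A = [set b; b'] -> a1 != a2 -> b != b' ->
  #|cl a1 b| = 2 -> #|cl a1 b'| = 1 -> #|cl a2 b| = 1 -> #|cl a2 b'| = 2 -> is_C4 eu ev.
Proof.
move=> eA eB a12 bb c11 c12 c21 c22.
have a1A : a1 \in A by rewrite eA !inE eqxx.
have a2A : a2 \in A by rewrite eA !inE eqxx orbT.
have bB : b \notin A by rewrite -in_setC eB !inE eqxx.
have b'B : b' \notin A by rewrite -in_setC eB !inE eqxx orbT.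
have neq x y : x \in A -> y \notin A -> (x == y) = false.
  by move=> xA yB; apply/negbTE; apply/eqP=> exy; move: yB; rewrite -exy xA.
have := c11; move/eqP/cards2P => [d1 [d1' [dd1 e11]]].
have := c12; move/eqP/cards1P => [f12 e12].
have := c21; move/eqP/cards1P => [f21 e21].
have := c22; move/eqP/cards2P => [d2 [d2' [dd2 e22]]].
have [ad1 bd1] : aend d1 = a1 /\ bend d1 = b by apply: clP; rewrite e11 !inE eqxx.
have [ad1' bd1'] : aend d1' = a1 /\ bend d1' = b by apply: clP; rewrite e11 !inE eqxx orbT.
have [ad2 bd2] : aend d2 = a2 /\ bend d2 = b' by apply: clP; rewrite e22 !inE eqxx.
have [ad2' bd2'] : aend d2' = a2 /\ bend d2' = b' by apply: clP; rewrite e22 !inE eqxx orbT.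
have [af12 bf12] : aend f12 = a1 /\ bend f12 = b' by apply: clP; rewrite e12 !inE eqxx.
have [af21 bf21] : aend f21 = a2 /\ bend f21 = b by apply: clP; rewrite e21 !inE eqxx.
have cV : #|V| = 4.
  by rewrite -(cardsC A) eB eA !cards2 a12 bb.
have cE : #|E| = 6.
  have := count_A bip [set: E] (subxx A).
  rewrite (eq_bigr (fun _ => 3)) ?sum_nat_const; last by move=> x _; apply: cub.
  have cA2 : #|A| = 2 by rewrite eA cards2 a12.
  rewrite cA2 => h; rewrite -cardsT -[6]/(2 * 3) -h.
  by apply: eq_card => e; rewrite !inE aendA.
pose fVn x := (x \notin A) + 2 * ((x != a1) && (x != b)).
pose fV x := (inord (fVn x) : 'I_4).
have valfV x : nat_of_ord (fV x) = fVn x.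
  by rewrite inordK // /fVn; case: (x \in A); case: (_ && _).
pose g (i : 'I_4) := nth a1 [:: a1; b; a2; b'] i.
have gK : cancel g fV.
  move=> i; apply: val_inj => /=; rewrite valfV /fVn /g.
  case: i => [[|[|[|[|//]]]] hi] /=.
  - by rewrite a1A eqxx.
  - by rewrite (negbTE bB) eqxx andbF.
  - by rewrite a2A eq_sym (negbTE a12) neq.
  - by rewrite (negbTE b'B) eq_sym neq // eq_sym (negbTE bb).
have gbij : bijective g by apply: inj_card_bij; [exact: can_inj gK | rewrite cV card_ord].
pose fEn e := if aend e == a1 then (if bend e == b then nat_of_bool (e != d1) else 5)
              else (if bend e == b then 2 else 3 + (e != d2)).
pose fE e := (inord (fEn e) : 'I_6).
have valfE e : nat_of_ord (fE e) = fEn e.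
  rewrite inordK // /fEn; case: (_ == a1); case: (_ == b) => //; by case: (_ != _).
pose gE (i : 'I_6) := nth d1 [:: d1; d1'; f21; d2; d2'; f12] i.
have gEK : cancel gE fE.
  move=> i; apply: val_inj => /=; rewrite valfE /fEn /gE.
  case: i => [[|[|[|[|[|[|//]]]]]] hi] /=.
  - by rewrite ad1 bd1 !eqxx.
  - by rewrite ad1' bd1' !eqxx eq_sym dd1.
  - by rewrite af21 bf21 eqxx eq_sym (negbTE a12).
  - by rewrite ad2 bd2 eq_sym (negbTE a12) eq_sym (negbTE bb) eqxx.
  - by rewrite ad2' bd2' eq_sym (negbTE a12) eq_sym (negbTE bb) eq_sym (negbTE dd2).
  - by rewrite af12 bf12 eqxx eq_sym (negbTE bb).
have gEbij : bijective gE by apply: inj_card_bij; [exact: can_inj gEK | rewrite cE card_ord].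
case: gbij => fV' gK' Kg'; case: gEbij => fE' gEK' KgE'.
exists fV', fE'; split.
- by exists g.
- by exists gE.
move=> e; rewrite -(KgE' e); move: (fE' e) => i; rewrite gEK'.
have eqg j x : (j == fV' x) = (g j == x).
  by apply/eqP/eqP => [->|<-]; [apply: Kg' | by rewrite gK'].
rewrite !eqg /C4_u /C4_v /gE /g.
case: i => [[|[|[|[|[|[|//]]]]]] hi] /=; rewrite ?inordK //=.
- by apply: (@endsP _ _ eu ev A).
- by apply: (@endsP _ _ eu ev A).
- by apply: endsP'.
- by apply: (@endsP _ _ eu ev A).
- by apply: (@endsP _ _ eu ev A).
- by apply: endsP'.
Qed.

Lemma c4_iso : connected eu ev -> #|A| = 2 -> #|~: A| = 2 -> is_C4 eu ev.
Proof.
move=> conn /eqP/cards2P [a1 [a2 [a12 eA]]] /eqP/cards2P [b1 [b2 [bb eB]]].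
have a1A : a1 \in A by rewrite eA !inE eqxx.
have a2A : a2 \in A by rewrite eA !inE eqxx orbT.
have b1B : b1 \notin A by rewrite -in_setC eB !inE eqxx.
have b2B : b2 \notin A by rewrite -in_setC eB !inE eqxx orbT.
have neq x y : x \in A -> y \notin A -> (x != y).
  by move=> xA yB; apply/eqP=> exy; move: yB; rewrite -exy xA.
have row x : x \in A -> #|cl x b1| + #|cl x b2| = 3.
  move=> xA; rewrite -(cardEx cub x).
  have -> : Ex x = cl x b1 :|: cl x b2.
    apply/setP=> e; rewrite !inE (incA bip) //.
    have := bendB bip e; rewrite -in_setC eB !inE.
    by case: (aend e == x).
  rewrite cardsU.
  have -> : cl x b1 :&: cl x b2 = set0.
    apply/setP=> e; rewrite !inE; case: (bend e == b1) /eqP => [->|]; last by rewrite !andbF.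
    by rewrite (negbTE bb) !andbF.
  by rewrite cards0 subn0.
have col y : y \notin A -> #|cl a1 y| + #|cl a2 y| = 3.
  move=> yB; rewrite -(cardEx cub y).
  have -> : Ex y = cl a1 y :|: cl a2 y.
    apply/setP=> e; rewrite !inE (incB bip) //.
    have : aend e \in [set a1; a2] by rewrite -eA aendA.
    rewrite !inE; case: (bend e == y); rewrite ?andbT ?andbF //.
  rewrite cardsU.
  have -> : cl a1 y :&: cl a2 y = set0.
    apply/setP=> e; rewrite !inE; case: (aend e == a1) /eqP => [->|] //=.
    by rewrite (negbTE a12) !andbF.
  by rewrite cards0 subn0.
have n11 : #|cl a1 b1| != 3.
  apply/negP => /eqP h; apply: (no_triple conn a1A b1B _ (neq _ _ a2A b1B) h); by rewrite eq_sym.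
have n12 : #|cl a1 b2| != 3.
  apply/negP => /eqP h; apply: (no_triple conn a1A b2B _ (neq _ _ a2A b2B) h); by rewrite eq_sym.
have r1 := row a1 a1A; have r2 := row a2 a2A; have k1 := col b1 b1B; have k2 := col b2 b2B.
move: n11 n12 r1 r2 k1 k2.
move: #|cl a1 b1| #|cl a1 b2| #|cl a2 b1| #|cl a2 b2| (@c4_from a1 a2 b1 b2) (@c4_from a1 a2 b2 b1).
move=> m11 m12 m21 m22 C1 C2 /eqP n11 /eqP n12 r1 r2 k1 k2.
have [h11|h11] : m11 = 2 \/ m11 = 1 by lia.
- apply: C1 => //; lia.
- apply: C2 => //; first by rewrite eB setUC.
  all: try by rewrite eq_sym.
  all: lia.
Qed.
End SG2.

Theorem proposition1p21 (V E : finType) (eu ev : E -> V) (A : {set V}) :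
  loopless eu ev -> cubic eu ev -> brace eu ev A -> ~ is_C4 eu ev ->
  (forall a b, a \in A -> b \notin A -> lambda_matchable eu ev a b) /\
  (~ is_Theta eu ev -> rho eu ev A = beta_prime_brace V).
Proof.
move=> ll cub [bip [conn V1 [M0 pm0] _] tf] nC4.
have [cA cB] := pm_card bip pm0.
have cAB : #|~: A| = #|A| by rewrite cA cB.
have cV : #|V| = #|A| + #|A| by rewrite -(cardsC A) cAB.
case: (ltnP #|A| 3) => hk.
  have [k0|[k1|k2]] : #|A| = 0 \/ #|A| = 1 \/ #|A| = 2 by lia.
  - by move: V1; rewrite cV k0.
  - split.
      move=> a b aA bB.
      have hA x : x \in A -> x = a.
        move=> xA; have : #|A| <= 1 by rewrite k1.
        by move/card_le1_eqP => /(_ x a xA aA).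
      have hB x : x \notin A -> x = b.
        move=> xB; have : #|~: A| <= 1 by rewrite cAB k1.
        by move/card_le1_eqP => /(_ x b); rewrite !inE => /(_ xB bB).
      apply/existsP; exists setT; apply/and3P; split; try by rewrite cub.
      apply/forallP=> x; apply/implyP=> /andP[xa xb].
      by case: (boolP (x \in A)) => h; [move: xa; rewrite (hA _ h) eqxx | move: xb; rewrite (hB _ h) eqxx].
    by move=> nT; exfalso; apply: nT; apply: (theta_iso bip); rewrite ?cAB.
  - by exfalso; apply: nC4; apply: (c4_iso bip cub conn); rewrite ?cAB.
split; first by move=> a b; apply: (lm bip tf pm0 cub hk).
move=> _; rewrite /rho /beta_prime_brace.
have -> : [set p : V * V | [&& p.1 \in A, p.2 \notin A & lambda_matchable eu ev p.1 p.2]] = setX A (~: A).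
  apply/setP => -[x y]; rewrite !inE /=.
  case: (boolP (x \in A)) => xA; case: (boolP (y \in A)) => yA //=.
  exact: (lm bip tf pm0 cub hk).
rewrite cardsX cAB ifT; last by rewrite cV; lia.
by rewrite cV addnn -muln2 mulnK // expn2.
Qed.
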